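(* Let $(G,c)$ be a metric TSP instance with $n\ge 3$ cities, let $T^*$ be a shortest tour and let $L=c(T^* )$. Then every 2-optimal tour $T'$ satisfies $$2\sum_{e\in E(T')} c(e)^2 \le L^2 .$$
   Context: A metric TSP instance with $n$ cities consists of a complete undirected graph $G$ on $n$ vertices together with $c: E(G)\to\mathbb{R}_{\ge 0}$ satisfying the triangle inequality $c(x,y)+c(y,z)\ge c(x,z)$. A tour is a cycle containing all vertices; its length is the sum of its edge lengths. Tours are regarded as oriented cycles. A tour is 2-optimal if for all pairs of edges $(a,b),(x,y)$ of the oriented tour, $c(a,x)+c(b,y)\ge c(a,b)+c(x,y)$. *)

(* Defs.v *)
From HB Require Import structures.
From mathcomp Require Import all_boot all_order all_algebra.
Set Implicit Arguments. Unset Strict Implicit. Unset Printing Implicit Defensive.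
Import Order.TTheory GRing.Theory Num.Theory.
Local Open Scope ring_scope.

(* Cities are 'I_n; c x y is the length of the edge {x,y} (x <> y).
   Diagonal values c x x are meaningless (no loops) and never constrained/used. *)
Definition metric (R : realFieldType) (n : nat) (c : 'I_n -> 'I_n -> R) : Prop :=
  [/\ forall x y : 'I_n, x != y -> c x y = c y x,
      forall x y : 'I_n, x != y -> 0 <= c x y &
      forall x y z : 'I_n, x != y -> y != z -> x != z -> c x z <= c x y + c y z].

(* An oriented tour is given by a bijection t : 'I_n -> 'I_n listing the cities
   in cyclic order; its edges are (t i, t (i+1 mod n)) for i : 'I_n. *)
Definition is_tour (n : nat) (t : 'I_n -> 'I_n) : Prop := injective t.

Definition tour_len (R : realFieldType) (n : nat) (c : 'I_n -> 'I_n -> R)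
  (t : 'I_n -> 'I_n) : R := \sum_(i < n) c (t i) (t (ordS i)).

Definition tour_sqlen (R : realFieldType) (n : nat) (c : 'I_n -> 'I_n -> R)
  (t : 'I_n -> 'I_n) : R := \sum_(i < n) (c (t i) (t (ordS i))) ^+ 2.

Definition two_optimal (R : realFieldType) (n : nat) (c : 'I_n -> 'I_n -> R)
  (t : 'I_n -> 'I_n) : Prop :=
  forall i j : 'I_n, i != j ->
    c (t i) (t (ordS i)) + c (t j) (t (ordS j)) <= c (t i) (t j) + c (t (ordS i)) (t (ordS j)).

Definition shortest_tour (R : realFieldType) (n : nat) (c : 'I_n -> 'I_n -> R)
  (t : 'I_n -> 'I_n) : Prop :=
  is_tour t /\ forall t' : 'I_n -> 'I_n, is_tour t' -> tour_len c t <= tour_len c t'.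

(* Main.v *)
Require Import Defs.
From HB Require Import structures.
From mathcomp Require Import all_boot all_order all_algebra.
From mathcomp Require Import ring lra zify.
Import Order.TTheory GRing.Theory Num.Theory.
Local Open Scope ring_scope.
Section Pure.
Variable R : realFieldType.
Definition pp (x : R) := if 0 <= x then x else 0.
Definition ab (x : R) := if 0 <= x then x else - x.
Definition Dc (L x y : R) := if ab (x - y) <= L - ab (x - y) then ab (x - y) else L - ab (x - y).

Ltac splitif := repeat match goal with
 | |- context [if ?b then _ else _] =>
   lazymatch b with context [if _ then _ else _] => fail | _ =>
   let H := fresh "H" in
     case: (boolP b) => H; [rewrite ?H | rewrite ?(negbTE H); move: H; rewrite -ltNge => H] end
 end.

Lemma Dc_tri L x y z : 0 <= x <= L -> 0 <= y <= L -> 0 <= z <= L ->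
  Dc L x z <= Dc L x y + Dc L y z.
Proof.
move=> /andP[? ?] /andP[? ?] /andP[? ?].
rewrite /Dc /ab; splitif; lra.
Qed.

Lemma Dc_sym L x y : Dc L x y = Dc L y x.
Proof. rewrite /Dc /ab; splitif; lra. Qed.

Lemma Dc_half L x y : 0 <= x <= L -> 0 <= y <= L -> 2 * Dc L x y <= L.
Proof. move=> /andP[? ?] /andP[? ?]; rewrite /Dc /ab; splitif; lra. Qed.

Lemma Dc_le L x y : x <= y -> Dc L x y <= y - x /\ Dc L x y <= L - (y - x).
Proof. move=> ?; rewrite /Dc /ab; splitif; lra. Qed.

Lemma Dc_ge L x y a : x <= y -> a <= y - x -> a <= L - (y - x) -> a <= Dc L x y.
Proof. move=> ? ? ?; rewrite /Dc /ab; splitif; lra. Qed.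

Lemma Dc_L0 L x : 0 <= x <= L -> Dc L L x = Dc L 0 x.
Proof. move=> /andP[? ?]; rewrite /Dc /ab; splitif; lra. Qed.

Lemma Dc_ge0 L x y : 0 <= x <= L -> 0 <= y <= L -> 0 <= Dc L x y.
Proof. move=> /andP[? ?] /andP[? ?]; rewrite /Dc /ab; splitif; lra. Qed.

Lemma pp_ge0 x : 0 <= pp x.
Proof. rewrite /pp; splitif; lra. Qed.

Lemma pp_pos x : 0 < pp x -> pp x = x.
Proof. rewrite /pp; splitif; lra. Qed.

Lemma pp_le x y : x <= y -> 0 <= y -> pp x <= y.
Proof. rewrite /pp; splitif; lra. Qed.

Lemma oneD (rho P : nat -> R) (L : R) (n : nat) :
  0 <= L -> (forall k, 0 <= rho k) -> (forall k, 2 * rho k <= L) ->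
  (forall k l, (k < l < n)%N -> 0 < rho k -> 0 < rho l ->
      rho k + rho l <= P l - P k /\ rho k + rho l <= L - (P l - P k)) ->
  \sum_(k < n) 2 * rho k <= L.
Proof.
move=> L0 r0 r2 Hp.
have inv : forall k, (k <= n)%N -> (forall j, (j < k)%N -> rho j = 0) \/
   exists f l, [/\ (f <= l < k)%N, 0 < rho f, 0 < rho l &
      \sum_(j < k) 2 * rho j <= rho f + rho l + (P l - P f)].
  elim=> [|k IH] Hk; first by left.
  have {IH} := IH (ltnW Hk); rewrite big_ord_recr /=.
  case: (boolP (0 < rho k)) => rk.
    case=> [Hz | [f [l [Hfl Hf Hl Hs]]]].
      right; exists k, k; split => //; first by rewrite leqnn ltnSn.
      rewrite big1 ?add0r => [|i _]; first lra.
      by rewrite Hz ?mulr0.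
    right; exists f, k; split => //.
      by move: Hfl => /andP[? ?]; apply/andP; split => //; lia.
    have [h1 _] := Hp l k ltac:(move: Hfl => /andP[? ?]; apply/andP; split => //; lia) Hl rk.
    lra.
  have rk0 : rho k = 0 by move: rk; rewrite -leNgt => rk; have := r0 k; lra.
  case=> [Hz | [f [l [Hfl Hf Hl Hs]]]].
    left => j; rewrite ltnS leq_eqVlt => /orP[/eqP -> //|]; exact: Hz.
  right; exists f, l; split => //.
    by move: Hfl => /andP[? ?]; apply/andP; split => //; lia.
  lra.
case: (inv n (leqnn n)) => [Hz | [f [l [Hfl Hf Hl Hs]]]].
  by rewrite big1 // => i _; rewrite Hz ?mulr0.
move: Hs; move: Hfl => /andP[]; rewrite leq_eqVlt => /orP[/eqP <- _|Hfl Hln] Hs.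
  have := r2 f; lra.
have [_ h2] := Hp f l ltac:(apply/andP; split => //) Hf Hl.
lra.
Qed.

Definition gf (L g x : R) := pp (g - x) + pp (g - (L - x)).
Definition GF (L g x : R) := (g ^+ 2 - (pp (g - x)) ^+ 2) / 2 + (pp (x - (L - g))) ^+ 2 / 2.

Lemma seg L g x y : 0 <= g -> 2 * g <= L -> 0 <= x -> x <= y -> y <= L ->
  GF L g y - GF L g x <= (y - x) * (gf L g x + gf L g y) / 2.
Proof.
move=> ? ? ? ? ?; rewrite /GF /gf /pp; splitif; nra.
Qed.

Lemma GF_sym L g x : 0 <= g -> 2 * g <= L -> 0 <= x <= L ->
  GF L g x + GF L g (L - x) = g ^+ 2.
Proof.
move=> ? ? /andP[? ?]; rewrite /GF /pp; splitif; nra.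
Qed.

Lemma GF0 L g : 0 <= g -> 2 * g <= L -> GF L g 0 = 0.
Proof. move=> ? ?; rewrite /GF /pp; splitif; nra. Qed.

Lemma phig L g s p : 0 <= g -> 2 * g <= L -> 0 <= s <= L -> 0 <= p <= L ->
  pp (g - Dc L s p) = gf L g (ab (s - p)).
Proof. move=> ? ? /andP[? ?] /andP[? ?]; rewrite /gf /Dc /ab /pp; splitif; lra. Qed.

Lemma ab_pos (x : R) : 0 <= x -> ab x = x. Proof. by rewrite /ab => ->. Qed.
Lemma ab_neg (x : R) : x <= 0 -> ab x = - x. Proof. rewrite /ab; splitif; lra. Qed.

Lemma trap (P : nat -> R) (L g p : R) n a :
 P 0%N = 0 -> P n = L -> (forall i j, (i <= j <= n)%N -> P i <= P j) ->
 (a <= n)%N -> p = P a -> 0 <= g -> 2 * g <= L ->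
 g ^+ 2 <= \sum_(k < n) (P k.+1 - P k) * (pp (g - Dc L (P k) p) + pp (g - Dc L (P k.+1) p)) / 2.
Proof.
move=> P0 Pn Pm an pa g0 gL.
pose Psi s := if s <= p then - GF L g (p - s) else GF L g (s - p).
have Pb k : (k <= n)%N -> 0 <= P k <= L.
  move=> kn; rewrite -P0 -Pn !Pm //; apply/andP; split => //; lia.
have pb : 0 <= p <= L by rewrite pa Pb.
have Psi_ge s : p <= s -> Psi s = GF L g (s - p).
  rewrite /Psi => ps; case: ifP => // sp.
  have -> : s = p by apply/eqP; rewrite eq_le sp ps.
  by rewrite subrr GF0 // oppr0.
have Psi_le s : s <= p -> Psi s = - GF L g (p - s) by rewrite /Psi => ->.
have -> : g ^+ 2 = \sum_(k < n) (Psi (P k.+1) - Psi (P k)).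
  rewrite -(big_mkord xpredT (fun k => Psi (P k.+1) - Psi (P k))).
  rewrite (telescope_sumr (fun k => Psi (P k))) // Pn P0.
  have HG := GF_sym L g p g0 gL pb.
  move: pb => /andP[p0 pL].
  rewrite Psi_ge // Psi_le // subr0 opprK -HG.
  by rewrite addrC.
apply: ler_sum => k _.
have kn : (k < n)%N := ltn_ord k.
have Hk := Pb k (ltnW kn); have Hk1 := Pb k.+1 kn.
have Hm : P k <= P k.+1 by apply: Pm; apply/andP; split => //; lia.
rewrite !phig //.
move: pb => /andP[p0 pL].
case: (ltnP k a) => ka.
  have h1 : P k.+1 <= p by rewrite pa; apply: Pm; apply/andP; split => //; lia.
  have h2 : P k <= p by lra.
  rewrite !Psi_le // !ab_neg ?subr_le0 //.
  have := seg L g (p - P k.+1) (p - P k) g0 gL.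
  rewrite !opprB.
  move: Hk Hk1 => /andP[? ?] /andP[? ?].
  move=> H; have {}H := H ltac:(lra) ltac:(lra) ltac:(lra).
  lra.
have h1 : p <= P k by rewrite pa; apply: Pm; apply/andP; split => //; lia.
have h2 : p <= P k.+1 by lra.
rewrite !Psi_ge // !ab_pos ?subr_ge0 //.
have := seg L g (P k - p) (P k.+1 - p) g0 gL.
move: Hk Hk1 => /andP[? ?] /andP[? ?].
move=> H; have {}H := H ltac:(lra) ltac:(lra) ltac:(lra).
lra.
Qed.
End Pure.
Arguments pp {R}. Arguments ab {R}. Arguments Dc {R}. Arguments gf {R}. Arguments GF {R}.
Arguments Dc_tri {R}. Arguments Dc_sym {R}. Arguments Dc_half {R}. Arguments Dc_le {R}. Arguments Dc_ge {R}. Arguments Dc_ge0 {R}. Arguments pp_ge0 {R}. Arguments pp_pos {R}. Arguments pp_le {R}.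
Section Main.
Variables (R : realFieldType) (N : nat) (c : 'I_N.+1 -> 'I_N.+1 -> R)
  (tau t : 'I_N.+1 -> 'I_N.+1).
Hypotheses (HN : (2 <= N)%N) (Hmet : metric c) (tauI : injective tau)
  (tI : injective t) (H2 : two_optimal c t).
Local Notation n := N.+1.

Definition cc (x y : 'I_n) := if x == y then 0 else c x y.

Lemma cc_sym x y : cc x y = cc y x.
Proof.
rewrite /cc eq_sym; case: eqP => // /eqP ne; case: Hmet => hs _ _; apply: hs; by rewrite eq_sym.
Qed.

Lemma cc_ge0 x y : 0 <= cc x y.
Proof. rewrite /cc; case: eqP => // /eqP; case: Hmet => _ hp _; exact: hp. Qed.

Lemma cc_xx x : cc x x = 0.
Proof. by rewrite /cc eqxx. Qed.

Lemma cc_tri x y z : cc x z <= cc x y + cc y z.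
Proof.
case: (eqVneq x z) => [->|xz]; first by rewrite cc_xx addr_ge0 ?cc_ge0.
case: (eqVneq x y) => [->|xy]; first by rewrite cc_xx add0r.
case: (eqVneq y z) => [->|yz]; first by rewrite cc_xx addr0.
rewrite /cc (negbTE xz) (negbTE xy) (negbTE yz).
by case: Hmet => _ _ ht; apply: ht.
Qed.

Lemma cc_c x y : x != y -> cc x y = c x y.
Proof. by rewrite /cc => /negbTE ->. Qed.

Lemma ordS_neq (i : 'I_n) : ordS i != i.
Proof.
apply/eqP => /(congr1 val) /=; have := ltn_ord i.
case: (ltnP i.+1 n) => h.
  by rewrite modn_small // => _; lia.
move=> hi; have -> : i.+1 = n by lia.
rewrite modnn => e; move: HN; lia.
Qed.

Definition V (k : nat) := tau (inord k).
Definition ell (k : nat) := cc (V k) (V (k.+1 %% n)).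
Definition P (k : nat) := \sum_(0 <= j < k) ell j.
Definition L := P n.

Lemma ell_ge0 k : 0 <= ell k. Proof. exact: cc_ge0. Qed.
Lemma P0 : P 0 = 0. Proof. by rewrite /P big_geq. Qed.
Lemma PS k : P k.+1 = P k + ell k. Proof. by rewrite /P big_nat_recr. Qed.
Lemma Pmono i j : (i <= j)%N -> P i <= P j.
Proof.
move=> ij; rewrite /P (big_cat_nat (leq0n i) ij) /= lerDl.
by apply: sumr_ge0 => k _; apply: ell_ge0.
Qed.
Lemma Pb k : (k <= n)%N -> 0 <= P k <= L.
Proof. by move=> kn; rewrite -P0 /L !Pmono. Qed.
Lemma L_ge0 : 0 <= L. Proof. by have /andP[] := @Pb n (leqnn n). Qed.

Lemma Lval : tour_len c tau = L.
Proof.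
rewrite /tour_len /L /P big_mkord; apply: eq_bigr => i _.
rewrite /ell /V inord_val.
have -> : inord (i.+1 %% n) = ordS i.
  by apply: val_inj; rewrite /= inordK // ltn_pmod.
rewrite cc_c //; apply/negP => /eqP /tauI /eqP; rewrite eq_sym.
by rewrite (negbTE (ordS_neq i)).
Qed.

Lemma path_le i j : (i <= j)%N -> (j < n)%N -> cc (V i) (V j) <= P j - P i.
Proof.
move=> ij; elim: j ij => [|j IH] ij jn.
  by move: ij; rewrite leqn0 => /eqP ->; rewrite cc_xx subrr.
move: ij; rewrite leq_eqVlt => /orP[/eqP ->|]; first by rewrite cc_xx subrr.
rewrite ltnS => ij.
have := IH ij (ltnW jn); rewrite PS.
have e : ell j = cc (V j) (V j.+1) by rewrite /ell modn_small.
have := cc_tri (V i) (V j) (V j.+1); rewrite -e.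
lra.
Qed.

Lemma wrap_le i j : (i <= j)%N -> (j < n)%N -> cc (V j) (V i) <= L - (P j - P i).
Proof.
move=> ij jn.
have h1 := @path_le j N (ltnSE jn) (ltnSn N).
have h2 := @path_le 0 i (leq0n i) (leq_ltn_trans ij jn).
have e : ell N = cc (V N) (V 0) by rewrite /ell modnn.
have hL : L = P N + ell N by rewrite /L PS.
have t1 := cc_tri (V j) (V N) (V i).
have t2 := cc_tri (V N) (V 0) (V i).
move: h2; rewrite P0 => h2.
rewrite e in hL.
lra.
Qed.

Definition pos (v : 'I_n) := P (invF tauI v).

Lemma posV (k : nat) : (k < n)%N -> pos (V k) = P k.
Proof. by move=> kn; rewrite /pos /V invF_f inordK. Qed.

Lemma pos_b v : 0 <= pos v <= L.
Proof. by apply: Pb; apply: ltnW. Qed.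

Lemma cc_Dc x y : cc x y <= Dc L (pos x) (pos y).
Proof.
suff H : forall i j : 'I_n, cc (V i) (V j) <= Dc L (P i) (P j).
  have ex : x = V (invF tauI x) by rewrite /V inord_val f_invF.
  have ey : y = V (invF tauI y) by rewrite /V inord_val f_invF.
  by rewrite /pos {1}ex {1}ey; apply: H.
move=> i j.
case: (leqP i j) => ij.
  apply: Dc_ge; first exact: Pmono.
    exact: path_le.
  by rewrite cc_sym; apply: wrap_le.
rewrite Dc_sym cc_sym; apply: Dc_ge; first by apply: Pmono; apply: ltnW.
  by apply: path_le => //; apply: ltnW.
by rewrite cc_sym; apply: wrap_le => //; apply: ltnW.
Qed.

Definition gam (m : 'I_n) := cc (t m) (t (ordS m)).
Definition r (m : 'I_n) (s : R) := pp (gam m - Dc L s (pos (t m))).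

Lemma gam_ge0 m : 0 <= gam m. Proof. exact: cc_ge0. Qed.
Lemma gam_half m : 2 * gam m <= L.
Proof.
have := cc_Dc (t m) (t (ordS m)); have := Dc_half _ _ _ (pos_b (t m)) (pos_b (t (ordS m))).
rewrite /gam; lra.
Qed.
Lemma r_le m s : 0 <= s <= L -> r m s <= gam m.
Proof.
move=> sb; apply: pp_le; last exact: gam_ge0.
have := Dc_ge0 _ _ _ sb (pos_b (t m)); lra.
Qed.

Lemma two_opt_cc m q : m != q ->
  gam m + gam q <= cc (t m) (t q) + cc (t (ordS m)) (t (ordS q)).
Proof.
move=> mq; rewrite /gam !cc_c ?(inj_eq tI) ?(inj_eq (@ordS_inj n)) //;
  first [exact: H2 | by rewrite eq_sym ordS_neq].
Qed.

Lemma slice s : 0 <= s <= L -> \sum_(m < n) 2 * r m s <= L.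
Proof.
move=> sb.
pose h (m : 'I_n) := invF tauI (t (ordS m)).
have hI : injective h by move=> a b /(can_inj (f_invF tauI)) /tI /ordS_inj.
pose hi := invF hI.
rewrite (reindex_inj (can_inj (f_invF hI))) /=.
pose rho (k : nat) := r (hi (inord k)) s.
have -> : \sum_(j < n) 2 * r (hi j) s = \sum_(j < n) 2 * rho j.
  by apply: eq_bigr => j _; rewrite /rho inord_val.
apply: (@oneD R rho P L n L_ge0).
- by move=> k; apply: pp_ge0.
- move=> k; have := r_le (hi (inord k)) s sb; have := gam_half (hi (inord k)).
  rewrite /rho; lra.
move=> k l /andP[kl ln] rk rl.
set m := hi (inord k) in rk; set q := hi (inord l) in rl.
have hm : h m = inord k by rewrite /m f_invF.
have hq : h q = inord l by rewrite /q f_invF.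
have mq : m != q.
  apply/eqP => e; have : inord k = inord l :> 'I_n by rewrite -hm -hq e.
  move/(congr1 (@nat_of_ord n)); rewrite !inordK //; [lia | lia].
have em : rho k = gam m - Dc L s (pos (t m)) by apply: pp_pos.
have eq : rho l = gam q - Dc L s (pos (t q)) by apply: pp_pos.
have pm : pos (t (ordS m)) = P k.
  by have -> : pos (t (ordS m)) = P (h m) by []; rewrite hm inordK //; lia.
have pq : pos (t (ordS q)) = P l.
  by have -> : pos (t (ordS q)) = P (h q) by []; rewrite hq inordK //; lia.
have T1 := Dc_tri _ _ _ _ (pos_b (t m)) sb (pos_b (t q)).
have T1' := Dc_sym L (pos (t m)) s.
have T2 := cc_Dc (t m) (t q).
have T3 := two_opt_cc m q mq.
have T4 := cc_Dc (t (ordS m)) (t (ordS q)).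
rewrite pm pq in T4.
have [T5 T6] := Dc_le L _ _ (@Pmono k l (ltnW kl)).
split; lra.
Qed.

Lemma main_sec : 2 * tour_sqlen c t <= (tour_len c tau) ^+ 2.
Proof.
rewrite Lval.
have E1 : tour_sqlen c t = \sum_(m < n) gam m ^+ 2.
  apply: eq_bigr => m _; rewrite /gam cc_c // (inj_eq tI) eq_sym; exact: ordS_neq.
pose Tr m := \sum_(k < n) (P k.+1 - P k) * (r m (P k) + r m (P k.+1)) / 2.
have T : forall m, gam m ^+ 2 <= Tr m.
  move=> m; apply: (@trap R P L (gam m) (pos (t m)) n (invF tauI (t m))).
  - exact: P0.
  - by [].
  - by move=> i j /andP[ij _]; exact: Pmono.
  - exact: ltnW.
  - by [].
  - exact: gam_ge0.
  - exact: gam_half.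
apply: (@le_trans _ _ (2 * \sum_(m < n) Tr m)).
  by rewrite E1; apply: ler_wpM2l => //; apply: ler_sum => m _; apply: T.
have E2 : 2 * \sum_(m < n) Tr m =
   \sum_(k < n) (P k.+1 - P k) * (\sum_(m < n) r m (P k) + \sum_(m < n) r m (P k.+1)).
  rewrite mulr_sumr /Tr.
  under eq_bigr => m _ do rewrite mulr_sumr.
  rewrite exchange_big /=; apply: eq_bigr => k _.
  rewrite -big_split /= mulr_sumr; apply: eq_bigr => m _.
  by field.
rewrite E2.
apply: (@le_trans _ _ (\sum_(k < n) (P k.+1 - P k) * L)).
  apply: ler_sum => k _; apply: ler_wpM2l.
    by rewrite subr_ge0 Pmono.
  have s1 := slice (P k) (@Pb k (ltnW (ltn_ord k))).
  have s2 := slice (P k.+1) (@Pb k.+1 (ltn_ord k)).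
  rewrite -!mulr_sumr in s1 s2; lra.
rewrite -mulr_suml -(big_mkord xpredT (fun k => P k.+1 - P k)) telescope_sumr //.
by rewrite P0 subr0 /L expr2.
Qed.
End Main.

Theorem mainTheorem4 (R : realFieldType) (n : nat) (c : 'I_n -> 'I_n -> R)
  (Tstar T' : 'I_n -> 'I_n) :
  (3 <= n)%N -> metric c -> shortest_tour c Tstar ->
  is_tour T' -> two_optimal c T' ->
  2 * tour_sqlen c T' <= (tour_len c Tstar) ^+ 2.
Proof.
case: n c Tstar T' => [|N] c Tstar T' //= Hn Hm [tauI _] tI H2.
exact: (@main_sec R N c Tstar T' Hn Hm tauI tI H2).
Qed.
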